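(* Suppose $p_j,p_{j'}$ (with $j<j'$, on segments $s_i,s_{i'}$ respectively) are two consecutive reflection points of $\mathrm{OPT}$ in its orientation, i.e. no other reflection point is visited between them. Then $p_j$ and $p_{j'}$ are not both left reflection points and not both right reflection points. Furthermore, if $s_i$ is to the left of $s_{i'}$, then $p_j$ is a right reflection point and $p_{j'}$ is a left reflection point (and the opposite holds if $s_{i'}$ is to the left of $s_i$).
   Context: Instance: vertical line segments $s_1,\dots,s_n$ in $\mathbb{R}^2$, each of length $1$, with pairwise distinct $x$-coordinates. A tour is a cyclic sequence of points $p_1,\dots,p_\sigma$, each on some segment, with every segment containing at least one $p_j$; the straight segments joining consecutive points are legs. $\mathrm{OPT}$ is a fixed minimum-cost tour, oriented $p_1\to p_2\to\cdots$, with no two consecutive points on the same segment (no vertical legs) and not self-crossing. A point $p_j$ of $\mathrm{OPT}$ on segment $s$ is a left (resp. right) reflection point if both of its incident legs lie in the half-plane $x\le x(s)$ (resp. $x\ge x(s)$); a reflection point is a left or right reflection point. *)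

(* Defs.v *)
From HB Require Import structures.
From mathcomp Require Import all_boot all_order all_algebra.
From mathcomp Require Import reals.
Set Implicit Arguments. Unset Strict Implicit. Unset Printing Implicit Defensive.
Import Order.TTheory GRing.Theory Num.Theory.
Local Open Scope ring_scope.

Section Defs.
Variable R : realType.
Definition point := (R * R)%type.

Definition on_seg (n : nat) (sx sy : 'I_n -> R) (i : 'I_n) (q : point) : Prop :=
  q.1 = sx i /\ sy i <= q.2 <= sy i + 1.

Definition dist (a b : point) : R :=
  Num.sqrt ((a.1 - b.1) ^+ 2 + (a.2 - b.2) ^+ 2).

(* A tour is a (cyclic) sequence of points p_0, ..., p_(size t - 1);
   indices are taken cyclically (0-based). *)
Definition pt (t : seq point) (j : nat) : point := nth (0, 0) t (j %% size t).
Definition nxt (t : seq point) (j : nat) : point := pt t j.+1.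
Definition prv (t : seq point) (j : nat) : point := pt t (j + size t).-1.

Definition is_tour (n : nat) (sx sy : 'I_n -> R) (t : seq point) : Prop :=
  (forall q, q \in t -> exists i, on_seg sx sy i q) /\
  (forall i, exists2 q, q \in t & on_seg sx sy i q).

Definition cost (t : seq point) : R :=
  \sum_(j < size t) dist (pt t j) (nxt t j).

Definition is_opt_tour (n : nat) (sx sy : 'I_n -> R) (t : seq point) : Prop :=
  is_tour sx sy t /\ forall t', is_tour sx sy t' -> cost t <= cost t'.

Definition in_leg (a b q : point) : Prop :=
  exists2 l : R, 0 <= l <= 1 &
    q = ((1 - l) * a.1 + l * b.1, (1 - l) * a.2 + l * b.2).

Definition no_vertical_legs (n : nat) (sx sy : 'I_n -> R) (t : seq point) : Prop :=
  forall j, (j < size t)%N -> forall i,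
    ~ (on_seg sx sy i (pt t j) /\ on_seg sx sy i (nxt t j)).

Definition orient (a b c : point) : R :=
  (b.1 - a.1) * (c.2 - a.2) - (b.2 - a.2) * (c.1 - a.1).
Definition legs_cross (a b c d : point) : Prop :=
  orient a b c * orient a b d < 0 /\ orient c d a * orient c d b < 0.

Definition not_self_crossing (t : seq point) : Prop :=
  forall j k, (j < size t)%N -> (k < size t)%N ->
    ~ legs_cross (pt t j) (nxt t j) (pt t k) (nxt t k).

Definition left_refl (n : nat) (sx sy : 'I_n -> R) (t : seq point) (j : nat) : Prop :=
  exists i, on_seg sx sy i (pt t j) /\
    forall q, in_leg (prv t j) (pt t j) q \/ in_leg (pt t j) (nxt t j) q ->
      q.1 <= sx i.
Definition right_refl (n : nat) (sx sy : 'I_n -> R) (t : seq point) (j : nat) : Prop :=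
  exists i, on_seg sx sy i (pt t j) /\
    forall q, in_leg (prv t j) (pt t j) q \/ in_leg (pt t j) (nxt t j) q ->
      sx i <= q.1.
Definition refl (n : nat) (sx sy : 'I_n -> R) (t : seq point) (j : nat) : Prop :=
  left_refl sx sy t j \/ right_refl sx sy t j.
End Defs.

(* Main.v *)
Require Import Defs.
From HB Require Import structures.
From mathcomp Require Import all_boot all_order all_algebra.
From mathcomp Require Import reals.
From mathcomp Require Import lra.
Import Order.TTheory GRing.Theory Num.Theory.
Local Open Scope ring_scope.

Section Aux.
Variable R : realType.

Lemma in_leg_l (a b : point R) : in_leg a b a.
Proof.
exists 0; first by rewrite lexx ler01.
by case: a => ? ? /=; rewrite subr0 !mul1r !mul0r !addr0.
Qed.

Lemma in_leg_r (a b : point R) : in_leg a b b.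
Proof.
exists 1; first by rewrite lexx ler01.
by case: b => ? ? /=; rewrite subrr !mul1r !mul0r !add0r.
Qed.

Lemma in_leg_le (a b q : point R) s : a.1 <= s -> b.1 <= s -> in_leg a b q -> q.1 <= s.
Proof.
move=> ha hb [l /andP[h1 h2] ->] /=; nra.
Qed.

Lemma in_leg_ge (a b q : point R) s : s <= a.1 -> s <= b.1 -> in_leg a b q -> s <= q.1.
Proof.
move=> ha hb [l /andP[h1 h2] ->] /=; nra.
Qed.

Lemma pt_addS (t : seq (point R)) m : pt t (m + size t) = pt t m.
Proof. by rewrite /pt modnDr. Qed.

Lemma prv_pt (t : seq (point R)) k : (0 < k)%N -> prv t k = pt t k.-1.
Proof.
move=> hk; rewrite /prv -(pt_addS t k.-1); congr pt.
by case: k hk.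
Qed.

Lemma mono (f : nat -> R) (j j' : nat) :
  (forall k, (j < k)%N -> (k < j')%N ->
     (f k.-1 < f k /\ f k < f k.+1) \/ (f k < f k.-1 /\ f k.+1 < f k)) ->
  f j < f j.+1 ->
  forall k, (j <= k)%N -> (k < j')%N -> f k < f k.+1.
Proof.
move=> H h0; elim=> [|k IH] hjk hkj.
  by move: hjk; rewrite leqn0 => /eqP <-.
case: (ltngtP j k.+1) hjk => // [hlt _|<- _]; last by [].
have := IH hlt (ltnW hkj).
have := H k.+1 hlt hkj; rewrite /=.
case=> [[_ ->]//|[h1 _] h2]; exfalso; lra.
Qed.

Lemma chain (f : nat -> R) (j j' : nat) :
  (forall k, (j <= k)%N -> (k < j')%N -> f k < f k.+1) ->
  (j < j')%N -> f j < f j'.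
Proof.
move=> H; elim: j' H => // m IH H hj.
move: hj; rewrite ltnS leq_eqVlt => /orP[/eqP e|hlt]; first by have := H j (leqnn j); rewrite -e; apply.
apply: lt_trans (IH _ hlt) (H m (ltnW hlt) _) => // k h1 h2.
by apply: H => //; apply: ltnW.
Qed.

End Aux.
Arguments mono {R}.
Arguments in_leg_l {R}.
Arguments in_leg_r {R}.
Arguments chain {R}.

Theorem lemma6 (R : realType) (n : nat) (sx sy : 'I_n -> R)
  (t : seq (point R)) :
  injective sx ->
  is_opt_tour sx sy t ->
  no_vertical_legs sx sy t ->
  not_self_crossing t ->
  forall (j j' : nat) (i i' : 'I_n),
    (j < j')%N -> (j' < size t)%N ->
    on_seg sx sy i (pt t j) -> on_seg sx sy i' (pt t j') ->
    refl sx sy t j -> refl sx sy t j' ->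
    (forall k, (j < k)%N -> (k < j')%N -> ~ refl sx sy t k) ->
    [/\ ~ (left_refl sx sy t j /\ left_refl sx sy t j'),
        ~ (right_refl sx sy t j /\ right_refl sx sy t j'),
        (sx i < sx i' -> right_refl sx sy t j /\ left_refl sx sy t j') &
        (sx i' < sx i -> left_refl sx sy t j /\ right_refl sx sy t j')].
Proof.
move=> inj [[tmem _] _] nov _ j j' i i' hjj' hj' si si' rj rj' nr.
set X := fun k => (pt t k).1.
have hsz : (0 < size t)%N by apply: leq_ltn_trans hj'.
have ptin : forall k, pt t k \in t.
  by move=> k; rewrite /pt mem_nth // ltn_pmod.
have onx : forall k, exists ik, on_seg sx sy ik (pt t k) /\ sx ik = X k.
  by move=> k; have [ik [h1 h2]] := tmem _ (ptin k); exists ik; split.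
have Xj : sx i = X j by case: si.
have Xj' : sx i' = X j' by case: si'.
have NR : forall k, (j < k)%N -> (k < j')%N ->
   (X k.-1 < X k /\ X k < X k.+1) \/ (X k < X k.-1 /\ X k.+1 < X k).
  move=> k h1 h2; have k0 : (0 < k)%N by apply: leq_ltn_trans h1.
  have := nr k h1 h2; rewrite /refl => nrk.
  have [ik [sk ek]] := onx k.
  have hp : prv t k = pt t k.-1 by apply: prv_pt.
  have NL : ~ (X k.-1 <= X k /\ X k.+1 <= X k).
    move=> [a b]; apply: nrk; left; exists ik; split => // q.
    rewrite hp ek; case; apply: in_leg_le => //; exact: lexx.
  have NRt : ~ (X k <= X k.-1 /\ X k <= X k.+1).
    move=> [a b]; apply: nrk; right; exists ik; split => // q.
    rewrite hp ek; case; apply: in_leg_ge => //; exact: lexx.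
  case: (ltrgtP (X k.-1) (X k)) => ha; case: (ltrgtP (X k.+1) (X k)) => hb.
  all: try (by left; split); try (by right; split).
  all: try (by exfalso; apply: NL; split; lra).
  all: try (by exfalso; apply: NRt; split; lra).
have step : X j != X j.+1.
  apply/eqP => e.
  have [i2 [s2 e2]] := onx j.+1.
  have ii : i2 = i by apply: inj; rewrite e2 Xj e.
  apply: (nov j (ltn_trans hjj' hj') i); split => //.
  by rewrite /nxt -ii.
have pj' : prv t j' = pt t j'.-1 by apply: prv_pt; apply: leq_ltn_trans hjj'.
have j'S : j'.-1.+1 = j' by case: j' hjj' pj' {nr NR Xj' rj' si' hj'}.
have jj'1 : (j <= j'.-1)%N by rewrite -ltnS j'S.
case: (ltrgtP (X j) (X j.+1)) step => // hlt _.
- have M := mono X j j' NR hlt.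
  have C := chain _ j j' M hjj'.
  have L1 : ~ left_refl sx sy t j.
    move=> [i0 [[e0 _] H]].
    have := H (nxt t j) (or_intror (in_leg_r _ _)).
    rewrite -e0 /nxt -/(X j) -/(X j.+1); lra.
  have R1 : ~ right_refl sx sy t j'.
    move=> [i0 [[e0 _] H]].
    have := H (prv t j') (or_introl (in_leg_l _ _)).
    have := M _ jj'1; rewrite j'S => /(_ (leqnn _)) m1.
    rewrite -e0 pj' -/(X j') -/(X j'.-1); lra.
  have rr : right_refl sx sy t j by case: rj.
  have ll : left_refl sx sy t j' by case: rj'.
  split; try tauto; rewrite Xj Xj' => h; exfalso; lra.
- pose Y := fun k => - X k.
  have NR' : forall k, (j < k)%N -> (k < j')%N ->
     (Y k.-1 < Y k /\ Y k < Y k.+1) \/ (Y k < Y k.-1 /\ Y k.+1 < Y k).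
    move=> k h1 h2; rewrite /Y !ltrN2.
    by case: (NR k h1 h2) => -[a b]; [right|left].
  have hY : Y j < Y j.+1 by rewrite /Y ltrN2.
  have M := mono Y j j' NR' hY.
  have C := chain _ j j' M hjj'.
  rewrite /Y in M C.
  have L1 : ~ right_refl sx sy t j.
    move=> [i0 [[e0 _] H]].
    have := H (nxt t j) (or_intror (in_leg_r _ _)).
    rewrite -e0 /nxt -/(X j) -/(X j.+1); lra.
  have R1 : ~ left_refl sx sy t j'.
    move=> [i0 [[e0 _] H]].
    have := H (prv t j') (or_introl (in_leg_l _ _)).
    have := M _ jj'1; rewrite j'S => /(_ (leqnn _)) m1.
    rewrite -e0 pj' -/(X j') -/(X j'.-1); lra.
  have rr : left_refl sx sy t j by case: rj.
  have ll : right_refl sx sy t j' by case: rj'.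
  split; try tauto; rewrite Xj Xj' => h; exfalso; lra.
Qed.
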